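(* Let $Q\in\mathbf{R}^{n\times n}$ be orthogonal, $V\in\mathbf{R}^{m\times n}$ with $VV^T=I_m$, and suppose the pair $(Q,V)$ is observable. Then for every $\sigma\in\mathbf{C}$ with $|\sigma|<1$, the matrix $Q-(1-\sigma)QV^TV$ is Schur stable.
   Context: A real matrix $Q$ is orthogonal if $QQ^T=Q^TQ=I$. A matrix is Schur stable if all its eigenvalues have modulus $<1$. $(Q,V)$ observable means the standard observability condition (no eigenvector $w$ of $Q$ with $Vw=0$). *)

(* Defs.v *)
From HB Require Import structures.
From mathcomp Require Import all_boot all_order all_algebra.
Set Implicit Arguments. Unset Strict Implicit. Unset Printing Implicit Defensive.
Import Order.TTheory GRing.Theory Num.Theory.
Local Open Scope ring_scope.

(* Real matrices are complex matrices (over a numeric closed field C, e.g. algC,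
   or the complex numbers) all of whose entries are real. *)
Definition real_mx (C : numClosedFieldType) (m n : nat) (A : 'M[C]_(m, n)) : Prop :=
  forall i j, A i j \is Num.real.

Definition orthogonal_mx (C : numClosedFieldType) (n : nat) (Q : 'M[C]_n) : Prop :=
  Q *m Q^T = 1%:M /\ Q^T *m Q = 1%:M.

Definition schur_stable (C : numClosedFieldType) (n : nat) (A : 'M[C]_n) : Prop :=
  forall lam : C, eigenvalue A lam -> `|lam| < 1.

Definition observable (C : numClosedFieldType) (m n : nat)
    (Q : 'M[C]_n) (V : 'M[C]_(m, n)) : Prop :=
  forall (w : 'cV[C]_n) (lam : C), w != 0 -> Q *m w = lam *: w -> V *m w != 0.

(* Main.v *)
Require Import Defs.
From HB Require Import structures.
From mathcomp Require Import all_boot all_order all_algebra.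
Import Order.TTheory GRing.Theory Num.Theory.
Local Open Scope ring_scope.

Section H.
Context {C : numClosedFieldType}.

Definition adj {k n : nat} (y : 'M[C]_(k, n)) : 'M[C]_(n, k) := (map_mx Num.conj y)^T.

Lemma real_conj {k n} (A : 'M[C]_(k, n)) : real_mx A -> map_mx Num.conj A = A.
Proof. by move=> hA; apply/matrixP=> i j; rewrite mxE conj_Creal. Qed.

Lemma adjM {k n p} (x : 'M[C]_(k, n)) (M : 'M[C]_(n, p)) :
  real_mx M -> adj (x *m M) = M^T *m adj x.
Proof. by move=> hM; rewrite /adj map_mxM (real_conj _ hM) trmx_mul. Qed.

Lemma adjB {k n} (x y : 'M[C]_(k, n)) : adj (x - y) = adj x - adj y.
Proof. by apply/matrixP=> i j; rewrite !mxE rmorphB. Qed.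

Lemma adjZ {k n} a (x : 'M[C]_(k, n)) : adj (a *: x) = a^* *: adj x.
Proof. by apply/matrixP=> i j; rewrite !mxE rmorphM. Qed.

Lemma nrmE {n} (y : 'rV[C]_n) : (y *m adj y) 0 0 = \sum_j `|y 0 j| ^+ 2.
Proof. rewrite mxE; apply: eq_bigr => j _; by rewrite !mxE normCK. Qed.

Lemma nrm_ge0 {n} (y : 'rV[C]_n) : 0 <= (y *m adj y) 0 0.
Proof. by rewrite nrmE; apply: sumr_ge0 => j _; rewrite exprn_ge0. Qed.

Lemma nrm_eq0 {n} (y : 'rV[C]_n) : (y *m adj y) 0 0 = 0 -> y = 0.
Proof.
rewrite nrmE => /eqP; rewrite psumr_eq0 => [/allP h|j _]; last by rewrite exprn_ge0.
apply/matrixP=> i j; rewrite ord1 mxE.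
have := h j (mem_index_enum j); rewrite /= sqrf_eq0 normr_eq0 => /eqP //.
Qed.
End H.
Theorem proposition1 (C : numClosedFieldType) (m n : nat)
    (Q : 'M[C]_n) (V : 'M[C]_(m, n))
    (hQr : real_mx Q) (hVr : real_mx V)
    (hQ : orthogonal_mx Q) (hV : V *m V^T = 1%:M)
    (hobs : observable Q V) :
  forall sigma : C, `|sigma| < 1 ->
    schur_stable (Q - (1 - sigma) *: (Q *m V^T *m V)).
Proof.
move=> s hs lam /eigenvalueP [v hv v0].
case: hQ => hQQt hQtQ.
have hVtr : real_mx V^T by move=> i j; rewrite mxE.
have hQtr : real_mx Q^T by move=> i j; rewrite mxE.
set P := V^T *m V.
have hPr : real_mx P.
  move=> i j; rewrite mxE; apply: rpred_sum => k _; apply: rpredM; [exact: hVtr|exact: hVr].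
have hPt : P^T = P by rewrite /P trmx_mul trmxK.
have hPP : P *m P = P by rewrite /P mulmxA -(mulmxA _ V) hV mulmx1.
set x := v *m Q.
set y := x *m P.
set c := 1 - s.
have hvx : v = x *m Q^T by rewrite /x -mulmxA hQQt mulmx1.
have hv' : x - c *: y = lam *: v.
  by rewrite -hv mulmxBr -scalemxAr /y /x /P !mulmxA.
have hadjy : adj y = P *m adj x by rewrite /y adjM // hPt.
have hadjv : adj v = Q *m adj x by rewrite hvx adjM // trmxK.
set Z := x *m adj y.
have h1 : y *m adj x = Z by rewrite /Z hadjy /y; symmetry; exact: mulmxA.
have h2 : y *m adj y = Z by rewrite /Z hadjy /y (mulmxA (x *m P)) -(mulmxA x P P) hPP; symmetry; exact: mulmxA.
have hvv : v *m adj v = x *m adj x by rewrite hadjv {1}hvx -mulmxA (mulmxA Q^T) hQtQ mul1mx.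
have E := congr1 (fun M => M *m adj M) hv'.
move: E => /=.
rewrite adjB !adjZ mulmxBl !mulmxBr -!scalemxAl -!scalemxAr hvv h1 h2 -/Z.
have hZ : 0 <= Z 0 0 by rewrite -h2 nrm_ge0.
have hZ0 : Z 0 0 = 0 -> y = 0 by rewrite -h2; apply: nrm_eq0.
have hX : 0 <= (x *m adj x) 0 0 by rewrite nrm_ge0.
clear h1 h2.
move: (x *m adj x) hX Z hZ hZ0 => X hX Z' hZ hZ0.
move/(congr1 (fun M : 'M_1 => M 0 0)); rewrite !mxE.
have hc : c^* + c - c * c^* = 1 - s * s^*.
  rewrite /c rmorphB rmorph1 mulrBl !mulrBr !mul1r !mulr1.
  rewrite opprB addrAC [(1 - _) + (_ - _)]addrC subrK addrC addrA subrK //.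
rewrite mulrA -mulrBl -addrA -opprD -mulrDl addrA hc -normCK mulrA -normCK.
rewrite real_ltNge ?normr_real ?real1 // => E0; apply/negP=> hl; move: E0.
move/eqP; rewrite subr_eq addrC -subr_eq => /eqP E.
have hb : 1 <= `|lam| ^+ 2 by rewrite exprn_ege1.
have ha : 0 < 1 - `|s| ^+ 2 by rewrite subr_gt0 exprn_ilt1.
have hN : Z' 0 0 = 0.
  apply/le_anti; rewrite hZ andbT -(pmulr_rle0 _ ha) -E.
  by rewrite -{1}(mul1r (X 0 0)) -mulrBl mulr_le0_ge0 // subr_le0.
have y0 := hZ0 hN.
move: hv'; rewrite y0 scaler0 subr0 => hxl.
have hl0 : lam != 0.
  apply/eqP => l0; move: v0; rewrite hvx hxl l0 scale0r mul0mx eqxx //.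
have hx0 : x != 0.
  by apply: contra v0 => /eqP x0; rewrite hvx x0 mul0mx.
have hvx' : x *m Q^T = lam^-1 *: x by rewrite -hvx hxl scalerA mulVf // scale1r.
have H : V *m x^T != 0.
  apply: (hobs _ (lam^-1)).
  - by rewrite trmx_eq0.
  - by rewrite -[x^T]trmxK -[Q]trmxK -trmx_mul trmxK hvx' linearZ.
move/negP: H; apply.
 rewrite -[x^T]trmxK -[V]trmxK -trmx_mul trmxK trmx_eq0.
  by rewrite -[x *m V^T]mulmx1 -hV mulmxA -(mulmxA x) -/P -/y y0 !mul0mx.
Qed.
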